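(* Let $(\xi_j)_{j\ge 0}$ be independent, identically distributed random variables taking values in $\{-1,0,1\}$ with $\max_{x\in\{-1,0,1\}} \mathbb{P}(\xi_0 = x) < \frac{1}{\sqrt{3}}$, and for $n\ge 1$ let $P(z):=\sum_{j=0}^n \xi_j z^j$. For every algebraic integer $\alpha\neq 0$, \[\mathbb{P}(\alpha\text{ is a root of } P)\le \exp\left(-\frac{n\log 3}{2\lceil \log 3 /|\log|\alpha||\rceil}\right).\]
   Context: When $|\alpha|=1$ the right-hand side is interpreted as $1$ (the ceiling being infinite). *)

(* Defs.v *)
From HB Require Import structures.
From mathcomp Require Import all_boot all_order all_algebra.
From mathcomp Require Import reals sequences exp.
From mathcomp.real_closed Require Import complex.
Set Implicit Arguments. Unset Strict Implicit. Unset Printing Implicit Defensive.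
Import Order.TTheory GRing.Theory Num.Theory.
Local Open Scope ring_scope.

Definition is_alg_int (R : realType) (a : R[i]) : Prop :=
  exists p : {poly int}, p \is monic /\ root (map_poly (fun z : int => z%:~R) p) a.

Definition cmod (R : realType) (a : R[i]) : R :=
  Num.sqrt (complex.Re a ^+ 2 + complex.Im a ^+ 2).

Definition val3 (k : 'I_3) : int := (k%:Z - 1)%R.

Definition evalP (R : realType) (n : nat) (xi : {ffun 'I_n.+1 -> 'I_3}) (a : R[i]) : R[i] :=
  \sum_(j < n.+1) (val3 (xi j))%:~R * a ^+ j.

(* Probability that a is a root of P, when xi_0..xi_n are i.i.d. with law p on
   {-1,0,1} (p k = P(xi_0 = val3 k)): the joint law is the product law. *)
Definition prob_root (R : realType) (p : 'I_3 -> R) (n : nat) (a : R[i]) : R :=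
  \sum_(xi : {ffun 'I_n.+1 -> 'I_3} | evalP xi a == 0) \prod_(j < n.+1) p (xi j).

(* Right-hand side exp(- n log 3 / (2 ceil(log 3 / |log|a||))), read as 1 when |a| = 1. *)
Definition rhs_bound (R : realType) (n : nat) (a : R[i]) : R :=
  if cmod a == 1 then 1
  else expR (- (n%:R * ln (3 : R)) /
             (2 * (Num.ceil (ln (3 : R) / `|ln (cmod a)|))%:~R)).

(* Main.v *)
Require Import Defs.
From HB Require Import structures.
From mathcomp Require Import all_boot all_order all_algebra.
From mathcomp Require Import reals sequences exp.
From mathcomp.real_closed Require Import complex.
From mathcomp Require Import ring lra.
Import Order.TTheory GRing.Theory Num.Theory.
Local Open Scope ring_scope.
Local Open Scope complex_scope.
Section S.
Variable R : realType.
Implicit Types x y : R[i].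
Lemma cmodE x : `|x| = (cmod x)%:C.
Proof. by rewrite normc_def. Qed.
Lemma cmodM x y : cmod (x * y) = cmod x * cmod y.
Proof. apply: (@complexI R). by rewrite -cmodE normrM !cmodE rmorphM. Qed.
Lemma cmodX x n : cmod (x ^+ n) = cmod x ^+ n.
Proof. apply: (@complexI R). by rewrite -cmodE normrX !cmodE rmorphXn. Qed.
Lemma cmodD x y : cmod (x + y) <= cmod x + cmod y.
Proof. rewrite -lecR. rewrite -cmodE. apply: (le_trans (ler_normD _ _)). by rewrite !cmodE rmorphD. Qed.
Lemma cmod_ge0 x : 0 <= cmod x.
Proof. exact: sqrtr_ge0. Qed.
Lemma cmod_eq0 x : (cmod x == 0) = (x == 0).
Proof. by rewrite -(inj_eq (@complexI R)) -cmodE normr_eq0. Qed.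
Lemma cmodN x : cmod (- x) = cmod x.
Proof. apply: (@complexI R). by rewrite -!cmodE normrN. Qed.
Lemma cmod_int (k : int) : cmod (k%:~R : R[i]) = `|k|%:~R.
Proof. apply: (@complexI R). by rewrite -cmodE -intr_norm rmorph_int. Qed.
Lemma cmod_sum (I : finType) (F : I -> R[i]) : cmod (\sum_i F i) <= \sum_i cmod (F i).
Proof.
rewrite -lecR -cmodE. apply: (le_trans (ler_norm_sum _ _ _)).
rewrite rmorph_sum. apply: ler_sum => i _. by rewrite cmodE.
Qed.

Lemma geom_big (x : R) m : 3 <= x -> 2 * \sum_(i < m) x ^+ i <= x ^+ m - 1.
Proof.
move=> hx; elim: m => [|m IH]; first by rewrite big_ord0 expr0; lra.
rewrite big_ord_recr /= exprS.
have h0 : 1 <= x ^+ m by apply: exprn_ege1; lra.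
nra.
Qed.

Lemma geom_small (x : R) m : 0 <= x -> 3 * x <= 1 -> 2 * \sum_(i < m) x ^+ i.+1 <= 1 - x ^+ m.
Proof.
move=> h0 hx; elim: m => [|m IH]; first by rewrite big_ord0 expr0; lra.
rewrite big_ord_recl /=.
have -> : \sum_(i < m) x ^+ (bump 0 i).+1 = x * \sum_(i < m) x ^+ i.+1.
  rewrite mulr_sumr; apply: eq_bigr => i _; by rewrite exprS.
rewrite exprS.
rewrite expr0 mulr1 (exprS x m). have := ler_wpM2l h0 IH. nra.
Qed.

Lemma term_bound (d : int) (b : R[i]) j : `|d| <= 2 -> cmod (d%:~R * b ^+ j) <= 2 * cmod b ^+ j.
Proof.
move=> hd. rewrite cmodM cmodX cmod_int. apply: ler_wpM2r; first by apply: exprn_ge0; exact: cmod_ge0.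
by rewrite (_ : (2 : R) = (2%:Z)%:~R) ?ler_int.
Qed.

Lemma noroot_big m (d : 'I_m -> int) (b : R[i]) : (forall i, `|d i| <= 2) -> 3 <= cmod b ->
  \sum_(i < m) (d i)%:~R * b ^+ i = 0 -> forall i, d i = 0.
Proof.
elim: m d => [|m IH] d hd hb hs; first by case.
rewrite big_ord_recr /= in hs.
have hm : d ord_max = 0.
  apply/eqP; apply/negPn/negP => hne.
  have e : cmod ((d ord_max)%:~R * b ^+ m) = cmod (\sum_(i < m) (d (widen_ord (leqnSn m) i))%:~R * b ^+ i).
    by rewrite -cmodN; congr cmod; apply/eqP; rewrite eq_sym -addr_eq0 hs.
  have h1 : cmod b ^+ m <= cmod ((d ord_max)%:~R * b ^+ m).
    rewrite cmodM cmodX cmod_int. rewrite -[X in X <= _]mul1r. apply: ler_wpM2r.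
      by apply: exprn_ge0; exact: cmod_ge0.
    by rewrite ler1z -gtz0_ge1 normr_gt0.
  have h2 := @cmod_sum _ (fun i : 'I_m => (d (widen_ord (leqnSn m) i))%:~R * b ^+ i).
  have h3 : \sum_(i < m) cmod ((d (widen_ord (leqnSn m) i))%:~R * b ^+ i) <= 2 * \sum_(i < m) cmod b ^+ i.
    rewrite mulr_sumr; apply: ler_sum => i _; exact: term_bound.
  have h4 := geom_big (cmod b) m hb.
  lra.
rewrite hm mul0r addr0 in hs.
have IH' := IH _ (fun i => hd _) hb hs.
move=> i; have [->//|hi] := eqVneq i ord_max.
have him : (i < m)%N.
  have := ltn_ord i; rewrite ltnS leq_eqVlt => /orP [/eqP hh|//].
  by case/eqP: hi; apply: val_inj.
have -> : i = widen_ord (leqnSn m) (Ordinal him) by apply: val_inj.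
exact: IH'.
Qed.

Lemma noroot_small m (d : 'I_m -> int) (b : R[i]) : (forall i, `|d i| <= 2) -> 3 * cmod b <= 1 -> b != 0 ->
  \sum_(i < m) (d i)%:~R * b ^+ i = 0 -> forall i, d i = 0.
Proof.
elim: m d => [|m IH] d hd hb hb0 hs; first by case.
rewrite big_ord_recl /= expr0 mulr1 in hs.
have hc0 : 0 < cmod b by rewrite lt_def cmod_eq0 hb0 cmod_ge0.
have h0 : d ord0 = 0.
  apply/eqP; apply/negPn/negP => hne.
  set s := \sum_(i < m) _ in hs.
  have e : cmod ((d ord0)%:~R : R[i]) = cmod s.
    by rewrite -cmodN; congr cmod; apply/eqP; rewrite eq_sym -addr_eq0 addrC hs.
  have h1 : 1 <= cmod ((d ord0)%:~R : R[i]) by rewrite cmod_int ler1z -gtz0_ge1 normr_gt0.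
  have h2 := @cmod_sum _ (fun i : 'I_m => (d (lift ord0 i))%:~R * b ^+ bump 0 i).
  have h3 : \sum_(i < m) cmod ((d (lift ord0 i))%:~R * b ^+ bump 0 i) <= 2 * \sum_(i < m) cmod b ^+ i.+1.
    rewrite mulr_sumr; apply: ler_sum => i _; exact: term_bound.
  have h4 := @geom_small (cmod b) m (cmod_ge0 b) hb.
  have h5 : 0 < cmod b ^+ m by apply: exprn_gt0.
  rewrite /s in e. lra.
rewrite h0 add0r in hs.
have hs' : \sum_(i < m) (d (lift ord0 i))%:~R * b ^+ i = 0.
  have : b * \sum_(i < m) (d (lift ord0 i))%:~R * b ^+ i = 0.
    rewrite mulr_sumr -[RHS]hs; apply: eq_bigr => i _. by rewrite exprS mulrCA.
  by move/eqP; rewrite mulf_eq0 (negbTE hb0) /= => /eqP.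
have IH' := IH _ (fun i => hd _) hb hb0 hs'.
move=> i; case: (unliftP ord0 i) => [j ->|->] //; exact: IH'.
Qed.
Lemma key (I T : finType) (t0 : T) (c : R) n : forall (S : {set I}) (w : I -> T -> R)
  (A : {set {ffun I -> T}}), #|S| = n -> 0 <= c -> (forall i t, 0 <= w i t) ->
  (forall i t, i \in S -> w i t <= c) -> (forall i, i \notin S -> \sum_t w i t <= 1) ->
  {in A &, forall f g : {ffun I -> T}, (forall i, i \notin S -> f i = g i) -> f = g} ->
  \sum_(f in A) \prod_i w i (f i) <= c ^+ n.
Proof.
elim: n => [|n IH] S w A hS hc hw hwS hwN hA.
  have S0 := cards0_eq hS; subst S.
  apply: (@le_trans _ _ (\sum_(f : {ffun I -> T}) \prod_i w i (f i))).
    rewrite [X in _ <= X](bigID (fun f => f \in A)) /= lerDl.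
    by apply: sumr_ge0 => f _; apply: prodr_ge0 => i _.
  rewrite -bigA_distr_bigA /= expr0; apply: prodr_ile1 => i _.
  rewrite hwN ?in_set0 // andbT. by apply: sumr_ge0.
have [s Hs] : exists s, s \in S.
  by apply/set0Pn; rewrite -card_gt0 hS.
pose phi (f : {ffun I -> T}) : {ffun I -> T} := [ffun i => if i == s then t0 else f i].
pose w' i t := if i == s then (t == t0)%:R else w i t.
have step1 : forall f : {ffun I -> T}, \prod_i w i (f i) <= c * \prod_i w' i (phi f i).
  move=> f; rewrite (bigD1 s) //= [X in _ <= _ * X](bigD1 s) //= /w' /phi ffunE !eqxx mul1r.
  have -> : \prod_(i | i != s) w' i (phi f i) = \prod_(i | i != s) w i (f i).
    by apply: eq_bigr => i /negbTE hi; rewrite /w' /phi ffunE hi.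
  apply: ler_wpM2r; first by apply: prodr_ge0.
  exact: hwS.
have hinj : {in A &, injective phi}.
  move=> f g hf hg e; apply: hA => // i hi.
  have his : i != s by apply: contraNneq hi => ->.
  by have := congr1 (fun h : {ffun I -> T} => h i) e; rewrite /phi !ffunE (negbTE his).
apply: (@le_trans _ _ (\sum_(f in A) c * \prod_i w' i (phi f i))).
  exact: ler_sum.
rewrite -mulr_sumr -(big_imset (fun g : {ffun I -> T} => \prod_i w' i (g i)) hinj) exprS.
apply: ler_wpM2l => //.
apply: (IH (S :\ s)).
- by move: hS; rewrite (cardsD1 s) Hs add1n => -[].
- exact: hc.
- by move=> i t; rewrite /w'; case: (i == s) => //; exact: ler0n.
- move=> i t; rewrite in_setD1 /w' => /andP [/negbTE -> hi]; exact: hwS.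
- move=> i; rewrite in_setD1 negb_and negbK /w'; case: eqP => [_ _|_ /= hi].
    rewrite (bigD1 t0) //= eqxx big1 ?addr0 // => t /negbTE -> //.
  exact: hwN.
- move=> g1 g2 /imsetP [f1 hf1 ->] /imsetP [f2 hf2 ->] e.
  congr phi; apply: hA => // i hi.
  have his : i != s by apply: contraNneq hi => ->.
  have := e i; rewrite /phi !ffunE (negbTE his); apply.
  by rewrite in_setD1 negb_and hi orbT.
Qed.
Lemma c_expr : 1 / Num.sqrt 3 = expR (- ln (3 : R) / 2) :> R.
Proof.
have h1 : 0 <= 1 / Num.sqrt (3:R) by rewrite divr_ge0 ?sqrtr_ge0.
apply/eqP; rewrite -(@eqrXn2 _ 2 _ _ isT h1 (expR_ge0 _)).
rewrite -expRM_natl expr_div_n expr1n sqr_sqrtr; last by [].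
have -> : (2%:R * (- ln (3:R) / 2)) = - ln 3 by field.
by rewrite expRN lnK ?div1r // posrE.
Qed.

Lemma prob_le (p : 'I_3 -> R) n (a : R[i]) (S : {set 'I_n.+1}) (c : R) m :
  #|S| = m -> (forall k, 0 <= p k) -> \sum_(k < 3) p k = 1 -> 0 <= c -> (forall k, p k <= c) ->
  {in [set xi : {ffun 'I_n.+1 -> 'I_3} | evalP xi a == 0] &, forall f g : {ffun 'I_n.+1 -> 'I_3},
     (forall i, i \notin S -> f i = g i) -> f = g} ->
  prob_root p n a <= c ^+ m.
Proof.
move=> hm hp hs hc hpc hinj.
have -> : prob_root p n a = \sum_(f in [set xi : {ffun 'I_n.+1 -> 'I_3} | evalP xi a == 0]) \prod_i (fun _ => p) i (f i).
  by apply: eq_bigl => f; rewrite inE.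
apply: (@key _ _ ord0 c m S (fun _ => p)) => //.
by move=> i _; rewrite hs.
Qed.
Lemma val3_bound (x y : 'I_3) : `|val3 x - val3 y| <= 2.
Proof. by case: x => [[|[|[|//]]] ?]; case: y => [[|[|[|//]]] ?]. Qed.
End S.

Theorem lemma1p5 (R : realType) (p : 'I_3 -> R)
  (p_ge0 : forall k, 0 <= p k)
  (p_sum1 : \sum_(k < 3) p k = 1)
  (p_max : forall k, p k < 1 / Num.sqrt 3)
  (n : nat) (hn : (1 <= n)%N)
  (a : R[i]) (ha_int : is_alg_int a) (ha0 : a != 0) :
  prob_root p n a <= rhs_bound n a.
Proof.
rewrite /rhs_bound; case: eqP => hc1.
  have := @prob_le R p n a set0 1 0 (cards0 _) p_ge0 p_sum1 ler01; rewrite expr1n; apply.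
    by move=> k; rewrite -p_sum1 (bigD1 k) //= lerDl sumr_ge0.
  by move=> f g _ _ h; apply/ffunP => i; apply: h; rewrite in_set0.
set c := cmod a.
have c0 : 0 < c by rewrite lt_def cmod_eq0 ha0 cmod_ge0.
have lnc0 : ln c != 0 by rewrite ln_eq0 //; apply/eqP.
set L := `|ln c|.
have L0 : 0 < L by rewrite normr_gt0.
have l30 : 0 < ln (3 : R) by apply: ln_gt0; lra.
set x := ln (3 : R) / L.
have x0 : 0 < x by apply: divr_gt0.
set kz := Num.ceil x.
have hx : x <= kz%:~R := ceil_ge x.
have kz0 : 0 < kz by rewrite -(ltr0z R); apply: lt_le_trans hx.
set k := `|kz|%N.
have hk : kz%:~R = k%:R :> R by rewrite /k -[in LHS](gez0_abs (ltW kz0)) pmulrn.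
have k0 : (0 < k)%N by rewrite /k absz_gt0 gt_eqF.
have hkL : ln (3:R) <= k%:R * L.
  by rewrite -ler_pdivrMr // -hk.
set m := (n %/ k).+1.
pose h (i : 'I_m) : 'I_n.+1 := inord (i * k).
have hval : forall i : 'I_m, (h i : nat) = (i * k)%N.
  move=> i; rewrite /h inordK // ltnS.
  apply: leq_trans (leq_trunc_div n k); rewrite leq_mul2r.
  by have := ltn_ord i; rewrite ltnS => ->; rewrite orbT.
have hinj : injective h.
  move=> i j e; apply: val_inj; have := hval i; rewrite e hval => /eqP.
  by rewrite eqn_pmul2r // eq_sym => /eqP.
set S := h @: [set: 'I_m].
have cS : #|S| = m by rewrite card_imset // cardsT card_ord.
apply: (le_trans (@prob_le R p n a S (1 / Num.sqrt 3) m cS p_ge0 p_sum1 _ (fun k => ltW (p_max k)) _)).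
1: by rewrite divr_ge0 ?sqrtr_ge0.
2: { rewrite c_expr -expRM_natl ler_expR hk.
  have hnm : (n%:R : R) <= m%:R * k%:R by rewrite -natrM ler_nat ltnW // ltn_ceil.
  have kR : 0 < (k%:R : R) by rewrite ltr0n.
  rewrite ler_pdivlMr; last by rewrite mulr_gt0.
  have := ler_wpM2r (ltW l30) hnm. nra. }
move=> f g; rewrite !inE => /eqP hf /eqP hg hagree.
pose D j := (val3 (f j) - val3 (g j))%R.
have hsum : \sum_(j < n.+1) (D j)%:~R * a ^+ j = 0.
  transitivity (evalP f a - evalP g a); last by rewrite hf hg subrr.
  rewrite /evalP -sumrB; apply: eq_bigr => j _.
  by rewrite /D intrB mulrBl.
have hsum2 : \sum_(i < m) (D (h i))%:~R * (a ^+ k) ^+ i = 0.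
  rewrite -[RHS]hsum (bigID (fun j => j \in S)) /= [X in _ = _ + X]big1 ?addr0; last first.
    by move=> j hj; rewrite /D hagree // subrr mul0r.
  rewrite (big_imset (fun j => (D j)%:~R * a ^+ j)); last by move=> i j _ _; exact: hinj.
  apply: eq_big => [i|i _]; first by rewrite inE.
  by rewrite hval mulnC exprM.
have hD : forall i, `|D (h i)| <= 2 by move=> i; exact: val3_bound.
have hck : cmod (a ^+ k) = expR (k%:R * ln c) by rewrite cmodX expRM_natl lnK // posrE.
have e3 : (3 : R) = expR (ln 3) by rewrite lnK // posrE.
have hd : forall i, D (h i) = 0.
  have [c1|c1] := ltP 1 c.
  - apply: (@noroot_big R m (fun i => D (h i)) (a ^+ k) hD _ hsum2).
    rewrite hck e3 ler_expR.
    by move: hkL; rewrite /L ger0_norm // ltW // ln_gt0.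
  - apply: (@noroot_small R m (fun i => D (h i)) (a ^+ k) hD _ _ hsum2); last by rewrite expf_eq0 (negbTE ha0) andbF.
    rewrite hck {1}e3 -expRD -[X in _ <= X]expR0 ler_expR.
    have hl : ln c < 0 by rewrite ln_lt0 // c0 lt_neqAle c1 andbT; apply/eqP.
    move: hkL; rewrite /L ltr0_norm //. lra.
apply/ffunP => j; case: (boolP (j \in S)) => hj; last exact: hagree.
move/imsetP: hj => [i _ ->].
have := hd i; rewrite /D => /eqP; rewrite subr_eq0 /val3 => /eqP /addIr [] e.
exact: val_inj.
Qed.
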